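(* Let $c>0$ and consider the space of variables $(\rho,u,v,p,e,dx,dy)$, with $q^{2}=u^{2}+v^{2}<c^{2}$, where $dx,dy$ are treated as independent coordinates. Put $\Gamma=1/\sqrt{c^{2}-q^{2}}$ and $S=(e+p)\Gamma^{2}$. For a real parameter $\epsilon$ (where all expressions are defined) define $T_\epsilon:(\rho,u,v,p,e,dx,dy)\mapsto(\rho^{*},u^{*},v^{*},p^{*},e^{*},dx^{*},dy^{*})$ by \[ u^{*}=\frac{u}{\epsilon p+1},\quad v^{*}=\frac{v}{\epsilon p+1},\quad p^{*}=\frac{p}{\epsilon p+1},\quad \rho^{*}=\rho c\Gamma\sqrt{\tilde\Delta}\,\frac{\epsilon p+1}{\epsilon(p+Sq^{2})+1}, \] \[ e^{*}=\frac{c^{2}(\epsilon p+1)(e+p)\tilde\Delta}{(\epsilon p+1)(c^{2}-q^{2})+\epsilon(e+p)q^{2}}-\frac{p}{\epsilon p+1},\qquad \tilde\Delta=1-\frac{q^{2}}{c^{2}(\epsilon p+1)^{2}}, \] \[ dx^{*}=\epsilon\big((p+Sv^{2})\,dx-Suv\,dy\big)+dx,\qquad dy^{*}=\epsilon\big(-Suv\,dx+(p+Su^{2})\,dy\big)+dy. \] (This is the subclass, with $a_1=-\epsilon^{-1}$, $a_2=a_4=\epsilon^{-1}$, $a_3=1$ and after rescaling $x^*\to a_1x^*$, $y^*\to a_1y^*$, of reciprocal transformations leaving invariant the two-dimensional steady relativistic gasdynamic system $\partial_x(Ru)+\partial_y(Rv)=0$, $\partial_x(p+Su^2)+\partial_y(Suv)=0$,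 $\partial_x(Suv)+\partial_y(p+Sv^2)=0$, $\partial_x(Su)+\partial_y(Sv)=0$, $R=\rho\Gamma$.) Then $\{T_\epsilon\}$ is a one-parameter Lie group of transformations with infinitesimal generator \[ X=-\rho eq^{2}\Gamma^{2}\partial_{\rho}-pu\,\partial_{u}-pv\,\partial_{v}-p^{2}\partial_{p}+(c^{2}p^{2}-e^{2}q^{2})\Gamma^{2}\partial_{e} \] \[ +\Big(((c^{2}-u^{2})p+ev^{2})\,dx-uv(e+p)\,dy\Big)\Gamma^{2}\partial_{dx}+\Big(((c^{2}-v^{2})p+eu^{2})\,dy-uv(e+p)\,dx\Big)\Gamma^{2}\partial_{dy}, \] that is, with $q^{*2}=u^{*2}+v^{*2}$, the transformed quantities satisfy the Cauchy problem \[ \frac{d\rho^{*}}{d\epsilon}=-\frac{\rho^{*}e^{*}q^{*2}}{c^{2}-q^{*2}},\quad \frac{du^{*}}{d\epsilon}=-p^{*}u^{*},\quad \frac{dv^{*}}{d\epsilon}=-p^{*}v^{*},\quad \frac{dp^{*}}{d\epsilon}=-p^{*2},\quad \frac{de^{*}}{d\epsilon}=\frac{c^{2}p^{*2}-q^{*2}e^{*2}}{c^{2}-q^{*2}}, \] \[ \frac{d(dx^{*})}{d\epsilon}=\frac{((c^{2}-u^{*2})p^{*}+e^{*}v^{*2})dx^{*}-u^{*}v^{*}(e^{*}+p^{*})dy^{*}}{c^{2}-q^{*2}},\quad \frac{d(dy^{*})}{d\epsilon}=\frac{((c^{2}-v^{*2})p^{*}+e^{*}u^{*2})dy^{*}-u^{*}v^{*}(e^{*}+p^{*})dx^{*}}{c^{2}-q^{*2}},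 \] with initial data at $\epsilon=0$ equal to $(\rho,u,v,p,e,dx,dy)$.
   Context: $c$ is the speed of light; $\rho$, $(u,v)$, $p$, $e$ are density, velocity components, pressure and energy density. The differentials $dx,dy$ are regarded as additional coordinates acted on by the transformations. A one-parameter Lie group of transformations is a family $T_\epsilon$ with $T_0=\mathrm{id}$ and $T_{\epsilon_1}\circ T_{\epsilon_2}=T_{\epsilon_1+\epsilon_2}$; its infinitesimal generator is the vector field of $\epsilon$-derivatives at $\epsilon=0$. *)

(* Defs.v *)
From Stdlib Require Import Reals.
Open Scope R_scope.

Record state : Type := mkState {
  s_rho : R; s_u : R; s_v : R; s_p : R; s_e : R; s_dx : R; s_dy : R }.

Definition q2 (s : state) : R := s_u s ^ 2 + s_v s ^ 2.

Definition Gam (c : R) (s : state) : R := 1 / sqrt (c ^ 2 - q2 s).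

Definition Sfun (c : R) (s : state) : R := (s_e s + s_p s) * Gam c s ^ 2.

Definition Dtilde (c eps : R) (s : state) : R :=
  1 - q2 s / (c ^ 2 * (eps * s_p s + 1) ^ 2).

Definition Teps (c eps : R) (s : state) : state :=
  let rho := s_rho s in let u := s_u s in let v := s_v s in
  let p := s_p s in let e := s_e s in let dx := s_dx s in let dy := s_dy s in
  let q := q2 s in let S := Sfun c s in let a := eps * p + 1 in
  let D := Dtilde c eps s in
  mkState
    (rho * c * Gam c s * sqrt D * a / (eps * (p + S * q) + 1))
    (u / a)
    (v / a)
    (p / a)
    (c ^ 2 * a * (e + p) * D / (a * (c ^ 2 - q) + eps * (e + p) * q) - p / a)
    (eps * ((p + S * v ^ 2) * dx - S * u * v * dy) + dx)
    (eps * (- S * u * v * dx + (p + S * u ^ 2) * dy) + dy).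

Definition admissible (c : R) (s : state) : Prop := q2 s < c ^ 2.

(* "All expressions are defined" at parameter eps: the denominators are
   nonzero and the argument of the square root is positive. *)
Definition Teps_defined (c eps : R) (s : state) : Prop :=
  let p := s_p s in let e := s_e s in let q := q2 s in
  eps * p + 1 <> 0 /\
  0 < Dtilde c eps s /\
  eps * (p + Sfun c s * q) + 1 <> 0 /\
  (eps * p + 1) * (c ^ 2 - q) + eps * (e + p) * q <> 0.

(* Right-hand side of the Cauchy problem, i.e. the components of the
   infinitesimal generator X (with Gamma^2 = 1/(c^2 - q^2)). *)
Definition Xgen (c : R) (s : state) : state :=
  let rho := s_rho s in let u := s_u s in let v := s_v s in
  let p := s_p s in let e := s_e s in let dx := s_dx s in let dy := s_dy s in
  let q := q2 s in
  mkState
    (- (rho * e * q) / (c ^ 2 - q))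
    (- (p * u))
    (- (p * v))
    (- (p ^ 2))
    ((c ^ 2 * p ^ 2 - q * e ^ 2) / (c ^ 2 - q))
    ((((c ^ 2 - u ^ 2) * p + e * v ^ 2) * dx - u * v * (e + p) * dy) / (c ^ 2 - q))
    ((((c ^ 2 - v ^ 2) * p + e * u ^ 2) * dy - u * v * (e + p) * dx) / (c ^ 2 - q)).

(* Main.v *)
Require Import Defs.
From Stdlib Require Import Reals Lra Field.
From Coquelicot Require Import Coquelicot.
Open Scope R_scope.

Lemma Sfun_eq c s : 0 < c ^ 2 - q2 s -> Sfun c s = (s_e s + s_p s) / (c ^ 2 - q2 s).
Proof.
  intros H. unfold Sfun, Gam. unfold Rdiv. rewrite Rmult_1_l.
  rewrite pow_inv. rewrite pow2_sqrt by lra. reflexivity.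
Qed.

Lemma sqrtD c a q : 0 < c -> a <> 0 -> 0 < 1 - q / (c^2 * a^2) ->
  sqrt (c^2 - q / a^2) = c * sqrt (1 - q / (c^2 * a^2)).
Proof.
  intros hc ha hD.
  replace (c^2 - q/a^2) with (c^2 * (1 - q / (c^2 * a^2))) by (field; lra).
  rewrite sqrt_mult by (try apply pow2_ge_0; lra).
  rewrite sqrt_pow2 by lra. reflexivity.
Qed.

Lemma ident c (hc : 0 < c) s (hs : admissible c s) : Teps c 0 s = s.
Proof.
  destruct s as [rho u v p e dx dy]. unfold admissible, q2 in *; cbn [s_rho s_u s_v s_p s_e s_dx s_dy] in *.
  unfold Teps, Dtilde, Sfun, Gam, q2; cbv beta zeta; cbn [s_rho s_u s_v s_p s_e s_dx s_dy].
  replace (1 - (u^2+v^2) / (c^2 * (0*p+1)^2)) with ((c^2 - (u^2+v^2)) / c^2) by (field; lra).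
  assert (hk : 0 < sqrt (c ^ 2 - (u ^ 2 + v ^ 2))) by (apply sqrt_lt_R0; lra).
  rewrite sqrt_div_alt by (apply pow_lt; lra). rewrite sqrt_pow2 by lra.
  f_equal; field; lra.
Qed.

Lemma group c (hc : 0 < c) s (hs : admissible c s) e1 e2 :
     Teps_defined c e1 s -> Teps_defined c e2 (Teps c e1 s) ->
     Teps_defined c (e1 + e2) s ->
     Teps c e2 (Teps c e1 s) = Teps c (e1 + e2) s.
Proof.
  intros H1 H2 H12.
  destruct H1 as [a1 [D1 [X1 M1]]].
  destruct H12 as [a12 [D12 [X12 M12]]].
  unfold Teps_defined in H2; cbv zeta in H2.
  destruct H2 as [a2 [D2 [X2 M2]]].
  assert (hK : 0 < c ^ 2 - q2 s) by (unfold admissible in hs; lra).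
  assert (hq1 : q2 (Teps c e1 s) = q2 s / (e1 * s_p s + 1) ^ 2).
  { unfold q2, Teps; cbv beta zeta; cbn [s_rho s_u s_v s_p s_e s_dx s_dy]. field; auto. }
  assert (hK1 : c ^ 2 - q2 (Teps c e1 s) = c^2 * Dtilde c e1 s).
  { rewrite hq1. unfold Dtilde. field. split; auto; lra. }
  assert (hK1p : 0 < c ^ 2 - q2 (Teps c e1 s)).
  { rewrite hK1. apply Rmult_lt_0_compat; auto. apply pow_lt; lra. }
  assert (hG1 : Gam c (Teps c e1 s) = 1 / (c * sqrt (Dtilde c e1 s))).
  { unfold Gam. rewrite hK1. rewrite sqrt_mult by (try apply pow2_ge_0; lra). rewrite sqrt_pow2 by lra. reflexivity. }
  assert (hD2 : Dtilde c e2 (Teps c e1 s) = Dtilde c (e1 + e2) s).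
  { unfold Dtilde at 1. rewrite hq1. unfold Dtilde. 
    unfold Teps; cbv beta zeta; cbn [s_rho s_u s_v s_p s_e s_dx s_dy]. field.
    repeat split; auto; lra. }
  assert (hr1 : 0 < sqrt (Dtilde c e1 s)) by (apply sqrt_lt_R0; auto).
  rewrite (Sfun_eq c s) in X1, X12 by auto.
  assert (hN1 : 0 < (c * (e1 * s_p s + 1)) ^ 2 - q2 s).
  { unfold Dtilde in D1. 
    replace ((c * (e1 * s_p s + 1)) ^ 2 - q2 s) with ((c * (e1 * s_p s + 1)) ^ 2 * (1 - q2 s / (c ^ 2 * (e1 * s_p s + 1) ^ 2))) by (field; auto; lra).
    apply Rmult_lt_0_compat; auto. rewrite <- Rsqr_pow2. apply Rsqr_pos_lt. apply Rmult_integral_contrapositive; split; auto; lra. }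
  assert (hS1 : Sfun c (Teps c e1 s) = (e1 * s_p s + 1) * (s_e s + s_p s) /
     ((e1 * s_p s + 1) * (c ^ 2 - q2 s) + e1 * (s_e s + s_p s) * q2 s)).
  { rewrite Sfun_eq by auto. rewrite hK1. unfold Teps, Dtilde; cbv beta zeta; cbn [s_rho s_u s_v s_p s_e s_dx s_dy]. 
    field. repeat split; auto; lra. }
  set (M1e := (e1 * s_p s + 1) * (c ^ 2 - q2 s) + e1 * (s_e s + s_p s) * q2 s) in *.
  set (M12e := ((e1 + e2) * s_p s + 1) * (c ^ 2 - q2 s) + (e1 + e2) * (s_e s + s_p s) * q2 s) in *.
  set (N1e := (c * (e1 * s_p s + 1)) ^ 2 - q2 s) in *.
  set (a1e := e1 * s_p s + 1) in *.
  set (a12e := (e1 + e2) * s_p s + 1) in *.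
  assert (hX2 : e2 * (s_p (Teps c e1 s) + Sfun c (Teps c e1 s) * q2 (Teps c e1 s)) + 1 = M12e / M1e).
  { rewrite hS1, hq1. unfold Teps, M1e, M12e, a1e, a12e; cbv beta zeta; cbn [s_rho s_u s_v s_p s_e s_dx s_dy]. field. repeat split; auto; lra. }
  assert (hM2 : (e2 * s_p (Teps c e1 s) + 1) * (c^2 - q2 (Teps c e1 s)) + e2 * (s_e (Teps c e1 s) + s_p (Teps c e1 s)) * q2 (Teps c e1 s) = N1e * M12e / (a1e^2 * M1e)).
  { rewrite hq1. unfold Teps, Dtilde, M1e, M12e, N1e, a1e, a12e; cbv beta zeta; cbn [s_rho s_u s_v s_p s_e s_dx s_dy]. field. repeat split; auto; lra. }
  assert (ha2 : e2 * s_p (Teps c e1 s) + 1 = a12e / a1e).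
  { unfold Teps, a1e, a12e; cbv beta zeta; cbn [s_rho s_u s_v s_p s_e s_dx s_dy]. field. auto. }
  unfold Teps at 1. cbv beta zeta.
  rewrite hM2, hX2, ha2, hS1, ?hq1, hG1, hD2.
  unfold Teps; cbv beta zeta; rewrite !(Sfun_eq c s) by auto.
  set (r1 := sqrt (Dtilde c e1 s)) in *.
  set (r12 := sqrt (Dtilde c (e1+e2) s)) in *.
  set (g := Gam c s) in *.
  clear hq1 hK1 hK1p hG1 hD2 hS1 hX2 hM2 ha2 X2 M2 D2 a2.
  clearbody r1 r12 g.
  cbn [s_rho s_u s_v s_p s_e s_dx s_dy].
  unfold Dtilde in *.
  subst a1e a12e M1e M12e N1e.
  unfold q2 in *.
  f_equal; field; repeat split; try (solve [auto | lra]).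
Qed.

Lemma N_pos c a q : 0 < c -> a <> 0 -> 0 < 1 - q / (c ^ 2 * a ^ 2) -> 0 < (c * a) ^ 2 - q.
Proof.
  intros hc ha hD.
  replace ((c * a) ^ 2 - q) with ((c * a) ^ 2 * (1 - q / (c ^ 2 * a ^ 2))) by (field; split; auto; lra).
  apply Rmult_lt_0_compat; auto. rewrite <- Rsqr_pow2. apply Rsqr_pos_lt.
  apply Rmult_integral_contrapositive; split; auto; lra.
Qed.

Ltac nz := repeat (match goal with
 | |- _ /\ _ => split
 | |- True => exact I
 | |- _ ^ _ <> 0 => apply pow_nonzero
 | |- _ * _ <> 0 => apply Rmult_integral_contrapositive_currified
 | |- _ => (assumption || lra)
 end).

Lemma d_rho c (hc : 0 < c) s (hs : admissible c s) eps : Teps_defined c eps s ->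
  derivable_pt_lim (fun t => s_rho (Teps c t s)) eps (s_rho (Xgen c (Teps c eps s))).
Proof.
  intros [a [D [X M]]].
  assert (hK : 0 < c ^ 2 - q2 s) by (unfold admissible in hs; lra).
  apply is_derive_Reals.
  unfold Xgen, Teps. cbv beta zeta. cbn [s_rho s_u s_v s_p s_e s_dx s_dy].
  rewrite !(Sfun_eq c s) in * by auto.
  set (g := Gam c s). clearbody g.
  unfold Dtilde at 1.
  auto_derive.
  - replace (c * (c * 1)) with (c ^ 2) by ring.
    replace ((eps * s_p s + 1) * ((eps * s_p s + 1) * 1)) with ((eps * s_p s + 1) ^ 2) by ring.
    replace (1 + - (q2 s * / (c ^ 2 * (eps * s_p s + 1) ^ 2))) with (Dtilde c eps s) by (unfold Dtilde; field; nz).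
    nz.
  - replace (c * (c * 1)) with (c ^ 2) by ring.
    replace ((eps * s_p s + 1) * ((eps * s_p s + 1) * 1)) with ((eps * s_p s + 1) ^ 2) by ring.
    replace (1 + - (q2 s * / (c ^ 2 * (eps * s_p s + 1) ^ 2))) with (Dtilde c eps s) by (unfold Dtilde; field; nz).
    set (r := sqrt (Dtilde c eps s)).
    assert (hr : 0 < r) by (apply sqrt_lt_R0; auto).
    assert (hr2 : r * r = Dtilde c eps s) by (apply sqrt_sqrt; lra).
    assert (Hinv : / (2 * r) = r / (2 * Dtilde c eps s)) by (rewrite <- hr2; field; lra).
    rewrite Hinv. clearbody r.
    unfold Dtilde in *. destruct s as [rho u v p e dx dy]. unfold q2 in *. cbn [s_rho s_u s_v s_p s_e s_dx s_dy] in *.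
    assert (hN := N_pos c (eps * p + 1) (u ^ 2 + v ^ 2) hc a D).
    field. nz.
Qed.

Lemma d_u c (hc : 0 < c) s (hs : admissible c s) eps : Teps_defined c eps s ->
  derivable_pt_lim (fun t => s_u (Teps c t s)) eps (s_u (Xgen c (Teps c eps s))).
Proof.
  intros [a [D [X M]]].
  assert (hK : 0 < c ^ 2 - q2 s) by (unfold admissible in hs; lra).
  assert (hN := N_pos c (eps * s_p s + 1) (q2 s) hc a D).
  apply is_derive_Reals.
  unfold Xgen, Teps, Dtilde in *. cbv beta zeta. cbn [s_rho s_u s_v s_p s_e s_dx s_dy].
  rewrite !(Sfun_eq c s) in * by auto.
  destruct s as [rho u v p e dx dy]. unfold admissible, q2 in *. cbn [s_rho s_u s_v s_p s_e s_dx s_dy] in *.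
  auto_derive.
  - simpl in *. nz.
  - field. nz.
Qed.

Lemma d_v c (hc : 0 < c) s (hs : admissible c s) eps : Teps_defined c eps s ->
  derivable_pt_lim (fun t => s_v (Teps c t s)) eps (s_v (Xgen c (Teps c eps s))).
Proof.
  intros [a [D [X M]]].
  assert (hK : 0 < c ^ 2 - q2 s) by (unfold admissible in hs; lra).
  assert (hN := N_pos c (eps * s_p s + 1) (q2 s) hc a D).
  apply is_derive_Reals.
  unfold Xgen, Teps, Dtilde in *. cbv beta zeta. cbn [s_rho s_u s_v s_p s_e s_dx s_dy].
  rewrite !(Sfun_eq c s) in * by auto.
  destruct s as [rho u v p e dx dy]. unfold admissible, q2 in *. cbn [s_rho s_u s_v s_p s_e s_dx s_dy] in *.
  auto_derive.
  - simpl in *. nz.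
  - field. nz.
Qed.

Lemma d_p c (hc : 0 < c) s (hs : admissible c s) eps : Teps_defined c eps s ->
  derivable_pt_lim (fun t => s_p (Teps c t s)) eps (s_p (Xgen c (Teps c eps s))).
Proof.
  intros [a [D [X M]]].
  assert (hK : 0 < c ^ 2 - q2 s) by (unfold admissible in hs; lra).
  assert (hN := N_pos c (eps * s_p s + 1) (q2 s) hc a D).
  apply is_derive_Reals.
  unfold Xgen, Teps, Dtilde in *. cbv beta zeta. cbn [s_rho s_u s_v s_p s_e s_dx s_dy].
  rewrite !(Sfun_eq c s) in * by auto.
  destruct s as [rho u v p e dx dy]. unfold admissible, q2 in *. cbn [s_rho s_u s_v s_p s_e s_dx s_dy] in *.
  auto_derive.
  - simpl in *. nz.
  - field. nz.
Qed.

Lemma d_e c (hc : 0 < c) s (hs : admissible c s) eps : Teps_defined c eps s ->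
  derivable_pt_lim (fun t => s_e (Teps c t s)) eps (s_e (Xgen c (Teps c eps s))).
Proof.
  intros [a [D [X M]]].
  assert (hK : 0 < c ^ 2 - q2 s) by (unfold admissible in hs; lra).
  assert (hN := N_pos c (eps * s_p s + 1) (q2 s) hc a D).
  apply is_derive_Reals.
  unfold Xgen, Teps, Dtilde in *. cbv beta zeta. cbn [s_rho s_u s_v s_p s_e s_dx s_dy].
  rewrite !(Sfun_eq c s) in * by auto.
  destruct s as [rho u v p e dx dy]. unfold admissible, q2 in *. cbn [s_rho s_u s_v s_p s_e s_dx s_dy] in *.
  auto_derive.
  - simpl in *. nz.
  - field. nz.
Qed.

Lemma d_dx c (hc : 0 < c) s (hs : admissible c s) eps : Teps_defined c eps s ->
  derivable_pt_lim (fun t => s_dx (Teps c t s)) eps (s_dx (Xgen c (Teps c eps s))).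
Proof.
  intros [a [D [X M]]].
  assert (hK : 0 < c ^ 2 - q2 s) by (unfold admissible in hs; lra).
  assert (hN := N_pos c (eps * s_p s + 1) (q2 s) hc a D).
  apply is_derive_Reals.
  unfold Xgen, Teps, Dtilde in *. cbv beta zeta. cbn [s_rho s_u s_v s_p s_e s_dx s_dy].
  rewrite !(Sfun_eq c s) in * by auto.
  destruct s as [rho u v p e dx dy]. unfold admissible, q2 in *. cbn [s_rho s_u s_v s_p s_e s_dx s_dy] in *.
  auto_derive.
  - simpl in *. nz.
  - field. nz.
Qed.

Lemma d_dy c (hc : 0 < c) s (hs : admissible c s) eps : Teps_defined c eps s ->
  derivable_pt_lim (fun t => s_dy (Teps c t s)) eps (s_dy (Xgen c (Teps c eps s))).
Proof.
  intros [a [D [X M]]].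
  assert (hK : 0 < c ^ 2 - q2 s) by (unfold admissible in hs; lra).
  assert (hN := N_pos c (eps * s_p s + 1) (q2 s) hc a D).
  apply is_derive_Reals.
  unfold Xgen, Teps, Dtilde in *. cbv beta zeta. cbn [s_rho s_u s_v s_p s_e s_dx s_dy].
  rewrite !(Sfun_eq c s) in * by auto.
  destruct s as [rho u v p e dx dy]. unfold admissible, q2 in *. cbn [s_rho s_u s_v s_p s_e s_dx s_dy] in *.
  auto_derive.
  - simpl in *. nz.
  - field. nz.
Qed.

Theorem mainTheorem3 (c : R) (hc : 0 < c) (s : state) (hs : admissible c s) :
  (* identity at eps = 0 *)
  Teps c 0 s = s /\
  (* group law, wherever all transformations involved are defined *)
  (forall e1 e2 : R,
     Teps_defined c e1 s -> Teps_defined c e2 (Teps c e1 s) ->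
     Teps_defined c (e1 + e2) s ->
     Teps c e2 (Teps c e1 s) = Teps c (e1 + e2) s) /\
  (* Cauchy problem: d/deps T_eps(s) = X(T_eps(s)) *)
  (forall eps : R, Teps_defined c eps s ->
     derivable_pt_lim (fun t => s_rho (Teps c t s)) eps (s_rho (Xgen c (Teps c eps s))) /\
     derivable_pt_lim (fun t => s_u (Teps c t s)) eps (s_u (Xgen c (Teps c eps s))) /\
     derivable_pt_lim (fun t => s_v (Teps c t s)) eps (s_v (Xgen c (Teps c eps s))) /\
     derivable_pt_lim (fun t => s_p (Teps c t s)) eps (s_p (Xgen c (Teps c eps s))) /\
     derivable_pt_lim (fun t => s_e (Teps c t s)) eps (s_e (Xgen c (Teps c eps s))) /\
     derivable_pt_lim (fun t => s_dx (Teps c t s)) eps (s_dx (Xgen c (Teps c eps s))) /\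
     derivable_pt_lim (fun t => s_dy (Teps c t s)) eps (s_dy (Xgen c (Teps c eps s)))).
Proof.
  split; [apply ident; auto|].
  split; [intros; apply group; auto|].
  intros eps H.
  repeat split; [apply d_rho|apply d_u|apply d_v|apply d_p|apply d_e|apply d_dx|apply d_dy]; auto.
Qed.
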